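(* Let $e\geq 2$, $N=\langle\sigma\rangle$ cyclic of order $2^e$, and let $G$ be a transitive subgroup of $\mathrm{Hol}(N)$ of order $2^{e+1}$ that contains $\varphi_{1+2^{e-1}}$. Then $|C_G(\varphi_{1+2^{e-1}})|=2^e$. Moreover, for any $[\sigma^u,\varphi_{-1}]\in G$ with $u$ odd, we have $|C_G([\sigma^u,\varphi_{-1}])|\leq 2^e$, and this inequality is strict if and only if there exists $[\sigma^v,\varphi_b]\in G$ with $u(b-1)\not\equiv -2v\pmod{2^{e-1}}$.
   Context: For an odd integer $a$, $\varphi_a\in\mathrm{Aut}(N)$ is $\sigma\mapsto\sigma^a$. Elements of $\mathrm{Hol}(N)=N\rtimes\mathrm{Aut}(N)$ are written $[\sigma^u,\varphi_a]$ with $[\sigma^u,\varphi_a][\sigma^v,\varphi_b]=[\sigma^{u+va},\varphi_{ab}]$, and $\varphi_a$ denotes $[1,\varphi_a]$. $\mathrm{Hol}(N)$ acts on $N$ by $[\sigma^u,\varphi_a]\cdot\sigma^v=\sigma^{u+av}$; a subgroup is transitive if it acts transitively on $N$. $C_G(x)$ is the centraliser of $x$ in $G$. *)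

(* Defs.v *)
From mathcomp Require Import all_boot all_order all_fingroup all_algebra.
Set Implicit Arguments. Unset Strict Implicit. Unset Printing Implicit Defensive.
Import GRing.Theory Num.Theory.

(* N = <sigma> cyclic of order 2^e is identified with 'I_(2^e) via
   sigma^x <-> x.  Hol(N) acts faithfully on N by
   [sigma^u, phi_a] . sigma^x = sigma^(u + a x), so Hol(N) is realized as the
   group of permutations of 'I_(2^e) of the form x |-> u + a x (mod 2^e), a odd. *)

Definition is_hol (e : nat) (u a : int) (s : {perm 'I_(2 ^ e)}) : Prop :=
  forall x : 'I_(2 ^ e), ((s x : nat)%:Z = modz (u + a * (x : nat)%:Z) (2 ^ e)%N%:Z)%R.

Definition Hol (e : nat) : {set {perm 'I_(2 ^ e)}} :=
  [set s : {perm 'I_(2 ^ e)} | [exists u : 'I_(2 ^ e), exists a : 'I_(2 ^ e),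
     odd a && [forall x : 'I_(2 ^ e), (s x : nat) == (u + a * x) %% 2 ^ e]]].
Arguments is_hol e u a s : clear implicits.
Arguments Hol e : clear implicits.

(* Main.v *)
Require Import Defs.
From mathcomp Require Import all_boot all_order all_fingroup all_algebra.
From mathcomp Require Import ring zify.
Import GRing.Theory Num.Theory.
Set Implicit Arguments. Unset Strict Implicit.
Local Open Scope ring_scope.

Lemma dz_add d m n : (d %| m)%Z -> (d %| n)%Z -> (d %| m + n)%Z.
Proof. exact: rpredD. Qed.
Lemma dz_sub d m n : (d %| m)%Z -> (d %| n)%Z -> (d %| m - n)%Z.
Proof. exact: rpredB. Qed.

Section H.
Variable e : nat.
Local Notation M := ((2 ^ e)%N%:Z).

Lemma hol_dvd v b (t : {perm 'I_(2 ^ e)}) x :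
  is_hol e v b t -> (M %| (t x : nat)%:Z - (v + b * (x : nat)%:Z))%Z.
Proof. by move=> H; rewrite H -eqz_mod_dvd modz_mod. Qed.

Lemma hol_of v b (t : {perm 'I_(2 ^ e)}) :
  (forall x : 'I_(2 ^ e), (M %| (t x : nat)%:Z - (v + b * (x : nat)%:Z))%Z) ->
  is_hol e v b t.
Proof.
move=> H x; have := H x; rewrite -eqz_mod_dvd => /eqP <-.
by rewrite modz_small // lez_nat ltz_nat /= ltn_ord.
Qed.

Lemma hol_eq v b v' b' (t t' : {perm 'I_(2 ^ e)}) :
  is_hol e v b t -> is_hol e v' b' t' -> (M %| v - v')%Z -> (M %| b - b')%Z ->
  t = t'.
Proof.
move=> H H' dv db; apply/permP => x; apply/val_inj.
suff E : ((t x : nat)%:Z = (t' x : nat)%:Z) by case: E.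
rewrite H H'; apply/eqP; rewrite eqz_mod_dvd.
have -> : v + b * (x : nat)%:Z - (v' + b' * (x : nat)%:Z) = (v - v') + (b - b') * (x : nat)%:Z by ring.
by apply: dz_add => //; apply: dvdz_mulr.
Qed.

Lemma hol_neq v b v' b' (t t' : {perm 'I_(2 ^ e)}) (x : 'I_(2^e)) :
  is_hol e v b t -> is_hol e v' b' t' -> ~~ (M %| (v + b * (x:nat)%:Z) - (v' + b' * (x : nat)%:Z))%Z ->
  t != t'.
Proof.
move=> H H' nd; apply/eqP => E; move: nd; rewrite -eqz_mod_dvd -H -H' E eqxx //.
Qed.

Lemma hol_mul v b v' b' (t t' : {perm 'I_(2 ^ e)}) :
  is_hol e v b t -> is_hol e v' b' t' -> is_hol e (v' + b' * v) (b' * b) (t * t').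
Proof.
move=> H H'; apply: hol_of => x; rewrite permM.
have h1 := hol_dvd x H; have h2 := hol_dvd (t x) H'.
have -> : ((t' (t x) : nat)%:Z - (v' + b' * v + b' * b * (x : nat)%:Z)) =
  ((t' (t x) : nat)%:Z - (v' + b' * (t x : nat)%:Z)) + b' * ((t x : nat)%:Z - (v + b * (x : nat)%:Z)) by ring.
by apply: dz_add => //; apply: dvdz_mull.
Qed.

Lemma hol_conj v b u (t s : {perm 'I_(2 ^ e)}) :
  is_hol e v b t -> is_hol e u (-1) s -> is_hol e (2 * v + b * u) (-1) (s ^ t)%g.
Proof.
move=> H Hs; apply: hol_of => x; rewrite /conjg !permM.
set y := (t^-1)%g x.
have ty : t y = x by rewrite /y -permM mulVg perm1.
have h1 := hol_dvd y H; rewrite ty in h1.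
have h2 := hol_dvd y Hs; have h3 := hol_dvd (s y) H.
have -> : (t (s y) : nat)%:Z - (2 * v + b * u + -1 * (x : nat)%:Z) =
   ((t (s y) : nat)%:Z - (v + b * (s y : nat)%:Z)) + b * ((s y : nat)%:Z - (u + -1 * (y : nat)%:Z))
   + ((x : nat)%:Z - (v + b * (y : nat)%:Z)) by ring.
by apply: dz_add => //; apply: dz_add => //; apply: dvdz_mull.
Qed.

Lemma Hol_is_hol (t : {perm 'I_(2 ^ e)}) (z : 'I_(2^e)) : (z : nat) = 0%N ->
  t \in Hol e -> exists a : nat, odd a /\ is_hol e (t z : nat)%:Z a%:Z t.
Proof.
move=> z0; rewrite inE => /existsP [u /existsP [a /andP [oa /forallP Ht]]].
have tz : (t z : nat) = u by rewrite (eqP (Ht z)) z0 muln0 addn0 modn_small.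
exists a; split => // x; rewrite tz (eqP (Ht x)) -modz_nat.
by rewrite PoszD PoszM.
Qed.

End H.

Lemma key k (x : int) : ((2^k.+1)%N%:Z %| (2^k)%N%:Z * x)%Z = (2 %| x)%Z.
Proof.
rewrite expnS PoszM.
have -> : (2%:Z * (2^k)%N%:Z) = (2^k)%N%:Z * 2 by rewrite mulrC.
rewrite dvdz_mul2l //.
by rewrite -lt0n expn_gt0.
Qed.

Lemma dvdz2n (n : nat) : (2 %| n%:Z)%Z = ~~ odd n.
Proof. by rewrite dvdzE /= dvdn2. Qed.

Lemma cent_phi k (phi t : {perm 'I_(2 ^ k.+1)}) (z : 'I_(2^k.+1)) : (z : nat) = 0%N ->
  is_hol k.+1 0 (1 + (2^k)%N%:Z) phi -> t \in Hol k.+1 ->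
  (t \in 'C[phi])%g = ~~ odd (t z).
Proof.
move=> z0 Hp /(Hol_is_hol z0) [a [oa Ht]].
have H1 := hol_mul Ht Hp; have H2 := hol_mul Hp Ht.
set M' := (2^k)%N%:Z in H1 H2 Hp *.
set tz := (t z : nat)%:Z in H1 H2 Ht *.
have E : (0 + (1 + M') * tz + ((1+M') * a%:Z) * (z:nat)%:Z) - (tz + a%:Z * 0 + (a%:Z * (1 + M')) * (z:nat)%:Z) = M' * tz.
  by rewrite z0; ring.
apply/cent1P/idP.
- move=> comm; rewrite -dvdz2n -(key k) -E; apply: contraT.
  by move/(hol_neq H1 H2); rewrite comm eqxx.
- move=> ev; apply: (hol_eq H1 H2).
    have -> : 0 + (1 + M') * tz - (tz + a%:Z * 0) = M' * tz by ring.
    by rewrite key dvdz2n.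
  have -> : (1 + M') * a%:Z - a%:Z * (1 + M') = 0 by ring.
  exact: dvdz0.
Qed.


From Stdlib Require Classical_Prop.

Lemma odd_int (q : int) : exists r, q = 2 * r \/ q = 2 * r + 1.
Proof.
exists (q %/ 2)%Z; have := divz_eq q 2.
have : (0 <= q %% 2)%Z by rewrite modz_ge0.
have : (q %% 2 < 2)%Z by rewrite ltz_pmod.
lia.
Qed.

Lemma hol_neq0 e v b v' b' (t t' : {perm 'I_(2 ^ e)}) (z : 'I_(2^e)) : (z : nat) = 0%N ->
  is_hol e v b t -> is_hol e v' b' t' -> ~~ ((2^e)%N%:Z %| v - v')%Z -> t != t'.
Proof.
move=> z0 H H' nd; apply: (hol_neq (x := z) H H'); rewrite z0.
by have -> : v + b * 0 - (v' + b' * 0) = v - v' by ring.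
Qed.

Lemma cong_split k (u v b : int) : (u %% 2)%Z = 1 ->
  (u * (b - 1) = - (2 * v) %[mod (2^k)%N%:Z])%Z ->
  ((2^k.+1)%N%:Z %| (2 * v + b * u) - u)%Z \/
  ((2^k.+1)%N%:Z %| (2 * v + b * u) - (1 + (2^k)%N%:Z) * u)%Z.
Proof.
move=> Hu /eqP; rewrite eqz_mod_dvd => /dvdzP [q Hq].
rewrite expnS PoszM.
move: Hq Hu; set P := (2^k)%N%:Z => Hq Hu.
have [r [Er|Er]] := odd_int q; have [j [Ej|Ej]] := odd_int u; subst.
- exfalso; move: Hu; rewrite mulrC modzMl //.
- left; apply/dvdzP; exists r; nia.
- exfalso; move: Hu; rewrite mulrC modzMl //.
- right; apply/dvdzP; exists (r - j); nia.
Qed.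

Lemma notcong k (u v b : int) :
  ~ (u * (b - 1) = - (2 * v) %[mod (2^k)%N%:Z])%Z ->
  ~~ ((2^k.+1)%N%:Z %| (2 * v + b * u) - u)%Z /\
  ~~ ((2^k.+1)%N%:Z %| (2 * v + b * u) - (1 + (2^k)%N%:Z) * u)%Z.
Proof.
move=> nc; rewrite expnS PoszM; set P := (2^k)%N%:Z.
split; apply/negP => /dvdzP [q Hq]; apply: nc; apply/eqP; rewrite eqz_mod_dvd; apply/dvdzP.
- exists (2 * q); rewrite -/P; nia.
- exists (2 * q + u); rewrite -/P; nia.
Qed.

Local Close Scope ring_scope.

Theorem lemma5p9 (e : nat) (G : {group {perm 'I_(2 ^ e)}}) :
  (2 <= e)%N ->
  G \subset Hol e ->
  [transitive G, on [set: 'I_(2 ^ e)] | 'P] ->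
  #|G| = (2 ^ e.+1)%N ->
  forall phi : {perm 'I_(2 ^ e)},
    is_hol e 0 (1 + (2 ^ (e - 1))%N%:Z)%R phi -> phi \in G ->
    #|('C_G[phi])%g| = (2 ^ e)%N /\
    (forall (u : int) (s : {perm 'I_(2 ^ e)}),
       modz u 2 = 1%R -> is_hol e u (-1)%R s -> s \in G ->
       (#|('C_G[s])%g| <= 2 ^ e)%N /\
       ((#|('C_G[s])%g| < 2 ^ e)%N <->
        exists (v b : int) (t : {perm 'I_(2 ^ e)}),
          [/\ t \in G, is_hol e v b t &
              ~ (u * (b - 1) = - (2 * v) %[mod (2 ^ (e - 1))%N%:Z])%Z])).
Proof.
Local Open Scope ring_scope.

case: e G => [|k] G // he GH Gtr cardG phi.
have -> : (k.+1 - 1 = k)%N by rewrite subn1.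
move=> Hp phiG.
have P0 : (0 < 2 ^ k)%N by rewrite expn_gt0.
have z0lt : (0 < 2 ^ k.+1)%N by rewrite expn_gt0.
pose z := Ordinal z0lt.
have z0 : (z : nat) = 0%N by [].
have onelt : (1 < 2 ^ k.+1)%N by rewrite expnS; lia.
pose one := Ordinal onelt.
have inHol : forall t, t \in G -> t \in Hol k.+1 by move=> t tG; apply: (subsetP GH).
split.
-
  have [g gG gz] : exists2 g, g \in G & one = aperm z g.
    by apply: (atransP2 Gtr); rewrite inE.
  have godd : forall t, t \in G -> odd (g (t z)) = ~~ odd (t z).
    move=> t tG; have := inHol g gG; rewrite inE => /existsP [u /existsP [a /andP [oa /forallP Hg]]].
    have gzu : (g z : nat) = u by rewrite (eqP (Hg z)) z0 muln0 addn0 modn_small.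
    rewrite (eqP (Hg (t z))) odd_mod; last by rewrite expnS oddM.
    rewrite oddD oddM oa -gzu.
    have -> : g z = one by rewrite gz.
    by [].
  have flip : forall t, t \in G -> (t * g \in 'C[phi])%g = ~~ (t \in 'C[phi])%g.
    move=> t tG; rewrite !(cent_phi z0 Hp) ?inHol ?groupM // permM.
    by rewrite godd.
  have cID := cardsID 'C[phi]%g G.
  have le1 : (#|('C_G[phi])%g| <= #|(G :\: 'C[phi])%g|)%N.
    rewrite -(card_rcoset _ g); apply: subset_leq_card; apply/subsetP => y.
    rewrite mem_rcoset => /setIP [tG tC].
    have yG : y \in G by rewrite -(mulgKV g y) groupM.
    by rewrite inE yG andbT -(mulgKV g y) flip // tC.
  have le2 : (#|(G :\: 'C[phi])%g| <= #|('C_G[phi])%g|)%N.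
    rewrite -(card_rcoset _ g); apply: subset_leq_card; apply/subsetP => y.
    rewrite mem_rcoset => /setDP [tG tC].
    have yG : y \in G by rewrite -(mulgKV g y) groupM.
    by rewrite inE yG /= -(mulgKV g y) flip // (negbTE tC).
  have E1 : (2^k.+1 = 2 * 2^k)%N by rewrite expnS.
  have E2 : (2^k.+2 = 2 * (2 * 2^k))%N by rewrite !expnS.
  move: cID; rewrite cardG => cID.
  have eqc : #|('C_G[phi])%g| = #|(G :\: 'C[phi])%g| by apply/eqP; rewrite eqn_leq le1 le2.
  rewrite -eqc in cID.
  by apply: double_inj; rewrite -addnn cID expnS mul2n.
- move=> u s Hu Hs sG.
  have Lag : (#|('C_G[s])%g| * #|(s ^: G)%g| = #|G|)%N.
    by rewrite -index_cent1 Lagrange // subsetIl.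
  have Hsp := hol_conj Hp Hs; rewrite mulr0 add0r in Hsp.
  have neq1 : (s ^ phi)%g != s.
    apply: (hol_neq0 z0 Hsp Hs).
    have -> : (1 + (2 ^ k)%N%:Z) * u - u = (2 ^ k)%N%:Z * u by ring.
    rewrite key; apply/negP => /dvdz_mod0P; rewrite Hu //.
  have sub : [set (s ^ phi)%g; s] \subset (s ^: G)%g.
    apply/subsetP => y; rewrite !inE => /orP [] /eqP ->.
      exact: memJ_class.
    exact: class_refl.
  have two : (2 <= #|(s ^: G)%g|)%N.
    by apply: leq_trans (subset_leq_card sub); rewrite cards2 neq1.
  have badcls : forall v b t, t \in G -> is_hol k.+1 v b t ->
      ~ (u * (b - 1) = - (2 * v) %[mod (2 ^ k)%N%:Z])%Z -> (2 < #|(s ^: G)%g|)%N.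
    move=> v b t tG Ht nc; rewrite ltnNge; apply/negP => le2.
    have eqS : [set (s ^ phi)%g; s] = (s ^: G)%g.
      by apply/eqP; rewrite eqEcard sub cards2 neq1.
    have Hst := hol_conj Ht Hs.
    have [n1 n2] := notcong nc.
    have := memJ_class s tG; rewrite -eqS !inE => /orP [] /eqP E.
      by move: (hol_neq0 z0 Hst Hsp n2); rewrite E eqxx.
    by move: (hol_neq0 z0 Hst Hs n1); rewrite E eqxx.
  have nobad : ~ (exists (v b : int) (t : {perm 'I_(2 ^ k.+1)}),
          [/\ t \in G, is_hol k.+1 v b t &
              ~ (u * (b - 1) = - (2 * v) %[mod (2 ^ k)%N%:Z])%Z]) ->
      (#|(s ^: G)%g| <= 2)%N.
    move=> Hno; apply: (@leq_trans #|[set (s ^ phi)%g; s]|); last by rewrite cards2; case: (_ != _).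
    apply: subset_leq_card; apply/subsetP => y /imsetP [t tG ->].
    have [a [oa Ht]] := Hol_is_hol z0 (inHol t tG).
    have cg : (u * (a%:Z - 1) = - (2 * (t z : nat)%:Z) %[mod (2 ^ k)%N%:Z])%Z.
      case: (eqVneq (u * (a%:Z - 1) %% (2 ^ k)%N%:Z)%Z (- (2 * (t z : nat)%:Z) %% (2 ^ k)%N%:Z)%Z) => // ne.
      exfalso; apply: Hno; exists (t z : nat)%:Z, a%:Z, t; split => //.
      by move=> E; rewrite E eqxx in ne.
    have Hst := hol_conj Ht Hs.
    rewrite !inE; apply/orP; case: (cong_split Hu cg) => D.
      right; apply/eqP; apply: (hol_eq Hst Hs D); rewrite subrr; exact: dvdz0.
    left; apply/eqP; apply: (hol_eq Hst Hsp D); rewrite subrr; exact: dvdz0.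
  have E1 : (2^k.+1 = 2 * 2^k)%N by rewrite expnS.
  have E2 : (2^k.+2 = 2 * (2 * 2^k))%N by rewrite !expnS.
  move: Lag; rewrite cardG => Lag.
  move: badcls nobad Lag two.
  set a := #|('C_G[s])%g|; set c := #|(s ^: G)%g| => badcls nobad Lag two.
  split; first by nia.
  split => [lt | [v [b [t [tG Ht nc]]]]].
    apply: Classical_Prop.NNPP => Hno; have := nobad Hno; nia.
  have := badcls v b t tG Ht nc; nia.
Qed.
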